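(* Let $\mathbf{T}\subset\mathbb{S}^3$ be a $\mathbb{Z}_2$-symmetric spherical tetrahedron with dihedral angles $A$, $B=E$, $C=F$, $D$ and edge lengths $l_A$, $l_B=l_E$, $l_C=l_F$, $l_D$. Put $a_+=\cos\frac{l_A+l_D}{2}$, $a_-=\cos\frac{l_A-l_D}{2}$, $b=\cos l_B$, $c=\cos l_C$, $$\Delta^\star=(a_++a_-+b+c)(a_++a_--b-c)(a_+-a_--b+c)(a_+-a_-+b-c),\qquad t^2=\frac{4\,(a_+a_--bc)(a_+b-a_-c)(a_+c-a_-b)}{\Delta^\star},$$ and let $s^\star_{ij}$ ($i,j=0,1,2,3$) be the $(i,j)$-cofactors of the matrix $$G^\star_s=\begin{pmatrix}1&\frac{a_+}{a_-}&\frac{b}{a_-}&\frac{c}{a_-}\\\frac{a_+}{a_-}&1&\frac{c}{a_-}&\frac{b}{a_-}\\\frac{b}{a_-}&\frac{c}{a_-}&1&\frac{a_+}{a_-}\\\frac{c}{a_-}&\frac{b}{a_-}&\frac{a_+}{a_-}&1\end{pmatrix}.$$ Then (i) $a_-^2-t^2=a_-^6\,(s^\star_{00})^2/\Delta^\star$; (ii) $a_+^2-t^2=a_-^6\,(s^\star_{01})^2/\Delta^\star$; (iii) $b^2-t^2=a_-^6\,(s^\star_{02})^2/\Delta^\star$; (iv) $c^2-t^2=a_-^6\,(s^\star_{03})^2/\Delta^\star$.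
   Context: A spherical tetrahedron $\mathbf{T}\subset\mathbb{S}^3\subset\mathbb{R}^4$ is the intersection of $\mathbb{S}^3$ with the cone over four linearly independent unit vectors $\mathrm{p}_0,\dots,\mathrm{p}_3$. Edge lengths $l_{ij}\in[0,\pi]$: $\cos l_{ij}=\langle\mathrm{p}_i,\mathrm{p}_j\rangle$; dihedral angles $\alpha_{ij}\in[0,\pi]$: $\cos\alpha_{ij}=-\langle\mathrm{v}_i,\mathrm{v}_j\rangle$ with $\mathrm{v}_i$ the outer unit normal of the face opposite $\mathrm{p}_i$. Notation: $l_A=l_{01}$, $l_B=l_{02}$, $l_C=l_{03}$, $l_D=l_{23}$, $l_E=l_{13}$, $l_F=l_{12}$; $A,\dots,F$ are the dihedral angles along the edges of lengths $l_A,\dots,l_F$. $\mathbf{T}$ is $\mathbb{Z}_2$-symmetric if invariant under rotation through $\pi$ about the axis through the midpoints of the edges $\mathrm{p}_0\mathrm{p}_1$ and $\mathrm{p}_2\mathrm{p}_3$ (so $l_B=l_E$, $l_C=l_F$, $B=E$, $C=F$). The $(i,j)$-cofactor of a matrix is $(-1)^{i+j}$ times the determinant of the matrix with row $i$ and column $j$ deleted. *)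

(* Defs.v *)
From HB Require Import structures.
From mathcomp Require Import all_boot all_order all_algebra.
From mathcomp Require Import reals trigo.
Set Implicit Arguments. Unset Strict Implicit. Unset Printing Implicit Defensive.
Import Order.TTheory GRing.Theory Num.Theory.
Local Open Scope ring_scope.

(* A spherical tetrahedron is given by the matrix P whose rows p_0,...,p_3
   are its vertices (vectors of R^4). *)

Definition gram {R : realType} (P : 'M[R]_4) : 'M[R]_4 := P *m P^T.

Definition spherical_tetrahedron {R : realType} (P : 'M[R]_4) : Prop :=
  (forall i : 'I_4, gram P i i = 1) /\ \det P != 0.

(* Z2-symmetry: invariance under the rotation through pi about the axis
   through the midpoints of p0p1 and p2p3, i.e. an orthogonal linear map
   (acting on row vectors x |-> x *m Q) swapping p0<->p1 and p2<->p3. *)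
Definition Z2_symmetric {R : realType} (P : 'M[R]_4) : Prop :=
  exists Q : 'M[R]_4, Q *m Q^T = 1%:M /\
    row 0 P *m Q = row 1 P /\ row 1 P *m Q = row 0 P /\
    row 2 P *m Q = row 3 P /\ row 3 P *m Q = row 2 P.

Definition edge_len {R : realType} (P : 'M[R]_4) (i j : 'I_4) : R :=
  acos (gram P i j).

Definition lA {R : realType} (P : 'M[R]_4) := edge_len P 0 1.
Definition lB {R : realType} (P : 'M[R]_4) := edge_len P 0 2.
Definition lC {R : realType} (P : 'M[R]_4) := edge_len P 0 3.
Definition lD {R : realType} (P : 'M[R]_4) := edge_len P 2 3.

(* The matrix G*_s.  Off-diagonal entry at (i,j):
   {i,j} = {0,1} or {2,3} (i+j = 1 or 5): a+/a- ;
   {i,j} = {0,2} or {1,3} (i+j = 2 or 4): b/a- ;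
   {i,j} = {0,3} or {1,2} (i+j = 3):      c/a- . *)
Definition Gstar {R : realType} (ap am b c : R) : 'M[R]_4 :=
  \matrix_(i < 4, j < 4)
    if i == j then 1
    else if (i + j == 1)%N || (i + j == 5)%N then ap / am
    else if (i + j == 2)%N || (i + j == 4)%N then b / am
    else c / am.

Definition Delta_star {R : realType} (ap am b c : R) : R :=
  (ap + am + b + c) * (ap + am - b - c) * (ap - am - b + c) * (ap - am + b - c).

Definition t_sq {R : realType} (ap am b c : R) : R :=
  4 * (ap * am - b * c) * (ap * b - am * c) * (ap * c - am * b)
    / Delta_star ap am b c.

(* Main.v *)
Require Import Defs.
From HB Require Import structures.
From mathcomp Require Import all_boot all_order all_algebra.
From mathcomp Require Import reals trigo.
Import Order.TTheory GRing.Theory Num.Theory.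
Local Open Scope ring_scope.


From mathcomp Require Import ring lra.

Lemma aux (R : realDomainType) (a0 a1 a2 a3 b0 b1 b2 b3 : R) :
  0 + a0 * a0 + a1 * a1 + a2 * a2 + a3 * a3 = 1 ->
  0 + b0 * b0 + b1 * b1 + b2 * b2 + b3 * b3 = 1 ->
  -1 <= 0 + a0 * b0 + a1 * b1 + a2 * b2 + a3 * b3 <= 1.
Proof.
move=> Ha Hb.
have := sqr_ge0 (a0 - b0); have := sqr_ge0 (a1 - b1); have := sqr_ge0 (a2 - b2); have := sqr_ge0 (a3 - b3).
have := sqr_ge0 (a0 + b0); have := sqr_ge0 (a1 + b1); have := sqr_ge0 (a2 + b2); have := sqr_ge0 (a3 + b3).
move=> *; apply/andP; split; nra.
Qed.
Lemma aux2 (R : realDomainType) (a0 a1 a2 a3 b0 b1 b2 b3 : R) :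
  0 + a0 * a0 + a1 * a1 + a2 * a2 + a3 * a3 = 1 ->
  0 + b0 * b0 + b1 * b1 + b2 * b2 + b3 * b3 = 1 ->
  0 + a0 * b0 + a1 * b1 + a2 * b2 + a3 * b3 = -1 ->
  [/\ a0 + b0 = 0, a1 + b1 = 0, a2 + b2 = 0 & a3 + b3 = 0].
Proof.
move=> Ha Hb Hab.
have := sqr_ge0 (a0 + b0); have := sqr_ge0 (a1 + b1); have := sqr_ge0 (a2 + b2); have := sqr_ge0 (a3 + b3).
move=> h3 h2 h1 h0.
have S : (a0 + b0)^+2 + (a1 + b1)^+2 + (a2 + b2)^+2 + (a3 + b3)^+2 = 0 by rewrite !sqrrD; lra.
split; apply/eqP; rewrite -sqrf_eq0 eq_le sqr_ge0 andbT; lra.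
Qed.

Section S.
Variable R : comRingType.
Definition subf (f : nat -> nat -> R) (i0 j0 a b : nat) := f (bump i0 a) (bump j0 b).
Lemma minorE n (f : nat -> nat -> R) (i0 j0 : 'I_n.+1) :
  row' i0 (col' j0 (\matrix_(i<n.+1,j<n.+1) f i j)) =
  \matrix_(i<n,j<n) subf f i0 j0 i j.
Proof. by apply/matrixP => i j; rewrite !mxE. Qed.
Lemma det1f (f : nat -> nat -> R) : \det (\matrix_(i<1,j<1) f i j) = f 0 0.
Proof. by rewrite det_mx11 mxE. Qed.
Lemma det2 (f : nat -> nat -> R) : \det (\matrix_(i<2,j<2) f i j) =
  f 0 0 * f 1 1 - f 0 1 * f 1 0.
Proof.
rewrite (expand_det_row _ ord0) !big_ord_recr !big_ord0 /= /cofactor !minorE !det1f !mxE /=.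
rewrite /subf /bump /=. ring.
Qed.
Lemma det3 (f : nat -> nat -> R) : \det (\matrix_(i<3,j<3) f i j) =
  f 0 0 * (f 1 1 * f 2 2 - f 1 2 * f 2 1) - f 0 1 * (f 1 0 * f 2 2 - f 1 2 * f 2 0)
  + f 0 2 * (f 1 0 * f 2 1 - f 1 1 * f 2 0).
Proof.
rewrite (expand_det_row _ ord0) !big_ord_recr !big_ord0 /= /cofactor !minorE !det2 !mxE /=.
rewrite /subf /bump /=. ring.
Qed.
Lemma det4 (f : nat -> nat -> R) : \det (\matrix_(i<4,j<4) f i j) =
  f 0 0 * (f 1 1 * (f 2 2 * f 3 3 - f 2 3 * f 3 2) - f 1 2 * (f 2 1 * f 3 3 - f 2 3 * f 3 1)
  + f 1 3 * (f 2 1 * f 3 2 - f 2 2 * f 3 1))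
 - f 0 1 * (f 1 0 * (f 2 2 * f 3 3 - f 2 3 * f 3 2) - f 1 2 * (f 2 0 * f 3 3 - f 2 3 * f 3 0)
  + f 1 3 * (f 2 0 * f 3 2 - f 2 2 * f 3 0))
 + f 0 2 * (f 1 0 * (f 2 1 * f 3 3 - f 2 3 * f 3 1) - f 1 1 * (f 2 0 * f 3 3 - f 2 3 * f 3 0)
  + f 1 3 * (f 2 0 * f 3 1 - f 2 1 * f 3 0))
 - f 0 3 * (f 1 0 * (f 2 1 * f 3 2 - f 2 2 * f 3 1) - f 1 1 * (f 2 0 * f 3 2 - f 2 2 * f 3 0)
  + f 1 2 * (f 2 0 * f 3 1 - f 2 1 * f 3 0)).
Proof.
rewrite (expand_det_row _ ord0) !big_ord_recr !big_ord0 /= /cofactor !minorE !det3 !mxE /=.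
rewrite /subf /bump /=. ring.
Qed.
End S.

Section T.
Variable R : realType.

Lemma gram_row (P : 'M[R]_4) i j : gram P i j = (row i P *m (row j P)^T) 0 0.
Proof. by rewrite /gram !mxE; apply: eq_bigr => k _; rewrite !mxE. Qed.

Lemma gramE (P : 'M[R]_4) i j : gram P i j = \sum_(k < 4) P i k * P j k.
Proof. by rewrite /gram !mxE; apply: eq_bigr => k _; rewrite !mxE. Qed.

Lemma gram_sym (P : 'M[R]_4) i j : gram P i j = gram P j i.
Proof. by rewrite !gramE; apply: eq_bigr => k _; rewrite mulrC. Qed.

Lemma gram_bound (P : 'M[R]_4) i j : gram P i i = 1 -> gram P j j = 1 ->
  -1 <= gram P i j <= 1.
Proof.
rewrite !gramE !big_ord_recr !big_ord0 /=; exact: aux.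
Qed.

Lemma gram_neq (P : 'M[R]_4) (i j : 'I_4) : i != j -> spherical_tetrahedron P ->
  gram P i j != -1.
Proof.
move=> nij [Hd HP]; apply/eqP => Hg.
have Hi := Hd i; have Hj := Hd j.
move: Hg Hi Hj; rewrite !gramE !big_ord_recr !big_ord0 /= => Hg Hi Hj.
set k0 := widen_ord _ (widen_ord _ (widen_ord _ ord_max)) in Hg Hi Hj.
set k1 := widen_ord _ (widen_ord _ ord_max) in Hg Hi Hj.
set k2 := widen_ord _ ord_max in Hg Hi Hj.
have [H0 H1 H2 H3] := aux2 _ _ _ _ _ _ _ _ _ Hi Hj Hg.
have Hall : forall k, P i k + P j k = 0.
  move=> k; have : k \in [:: k0; k1; k2; ord_max].
    by rewrite !inE; case: k => [[|[|[|[|?]]]] ?] //=.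
  by rewrite !inE => /or4P [] /eqP ->.
pose u : 'rV[R]_4 := \row_k ((k == i)%:R + (k == j)%:R).
have Hu : u *m P = 0.
  apply/matrixP => a k; rewrite !mxE.
  rewrite (bigD1 i) //= (bigD1 j) 1?eq_sym //= [X in _ + (_ + X)]big1.
    rewrite !mxE !eqxx (negbTE nij) eq_sym (negbTE nij).
    by rewrite addr0 add0r !mul1r addr0; apply: Hall.
  move=> l /andP [] Hli Hlj; rewrite !mxE (negbTE Hli) (negbTE Hlj).
  by rewrite addr0 mul0r.
have Punit : P \in unitmx by rewrite unitmxE unitfE.
have : u = 0 by rewrite -(mulmxK Punit u) Hu mul0mx.
move/matrixP => /(_ 0 i); rewrite !mxE eqxx (negbTE nij) => /eqP.
by rewrite addr0 oner_eq0.
Qed.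

Lemma ordI m (H : (m < 4)%N) : Ordinal H = inord m :> 'I_4.
Proof. by apply/val_inj; rewrite /= inordK. Qed.
Lemma o0 : (0 : 'I_4) = inord 0. Proof. by apply/val_inj; rewrite /= inordK. Qed.
Lemma o1 : (1 : 'I_4) = inord 1. Proof. by apply/val_inj; rewrite /= inordK. Qed.
Lemma o2 : (2 : 'I_4) = inord 2. Proof. by apply/val_inj; rewrite /= inordK. Qed.
Lemma o3 : (3 : 'I_4) = inord 3. Proof. by apply/val_inj; rewrite /= inordK. Qed.

Definition ge (x y b c : R) (i j : nat) : R :=
  if i == j then 1 else if (i + j == 1)%N then x else if (i + j == 5)%N then y
  else if (i + j == 2)%N || (i + j == 4)%N then b else c.

Definition hs (ap am b c : R) (i j : nat) : R :=
  if i == j then 1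
    else if (i + j == 1)%N || (i + j == 5)%N then ap / am
    else if (i + j == 2)%N || (i + j == 4)%N then b / am
    else c / am.

Lemma GstarE ap am b c : Gstar ap am b c = \matrix_(i<4,j<4) hs ap am b c i j.
Proof. by apply/matrixP => i j; rewrite !mxE. Qed.

Lemma gramG (P : 'M[R]_4) : spherical_tetrahedron P -> Z2_symmetric P ->
  gram P = \matrix_(i<4,j<4) ge (gram P 0 1) (gram P 2 3) (gram P 0 2) (gram P 0 3) i j.
Proof.
move=> [Hd _] [Q [HQ [H01 [H10 [H23 H32]]]]].
have E12 : gram P 1 2 = gram P 0 3.
  rewrite !gram_row -H01 -H32 trmx_mul -!mulmxA (mulmxA Q) HQ mul1mx //.
have E13 : gram P 1 3 = gram P 0 2.
  rewrite !gram_row -H01 -H23 trmx_mul -!mulmxA (mulmxA Q) HQ mul1mx //.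
apply/matrixP => i j; rewrite mxE /ge.
case: i => [[|[|[|[|?]]]] Hi] //; case: j => [[|[|[|[|?]]]] Hj] //=.
all: rewrite !ordI ?o3 ?o2 ?o1 ?o0.
all: rewrite ?o3 ?o2 ?o1 ?o0 in E12 E13.
all: try first [ by apply: Hd | by [] | by rewrite gram_sym | by rewrite E12 | by rewrite E13
  | by rewrite gram_sym E12 | by rewrite gram_sym E13 ].
Qed.


Lemma det_gram (P : 'M[R]_4) : spherical_tetrahedron P -> Z2_symmetric P ->
  let x := gram P 0 1 in let y := gram P 2 3 in let b := gram P 0 2 in let c := gram P 0 3 in
  \det P ^+ 2 = (1 + x * y) ^+ 2 - (x + y) ^+ 2 - 2 * (1 + x * y) * (b ^+ 2 + c ^+ 2)
     + 4 * (x + y) * b * c + (b ^+ 2 - c ^+ 2) ^+ 2.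
Proof.
move=> HT HZ x y b c.
have -> : \det P ^+ 2 = \det (gram P) by rewrite /gram det_mulmx det_tr expr2.
rewrite (gramG P HT HZ) det4 /ge /= -/x -/y -/b -/c.
ring.
Qed.

Lemma alg_id (p m b c L s : R) : m != 0 -> Delta_star p m b c != 0 ->
  L * Delta_star p m b c - 4 * (p * m - b * c) * (p * b - m * c) * (p * c - m * b) = m ^+ 6 * s ^+ 2 ->
  L - t_sq p m b c = m ^+ 6 * s ^+ 2 / Delta_star p m b c.
Proof.
move=> Hm HD H; apply: (mulIf HD); rewrite mulrBl /t_sq !divfK //.
Qed.

End T.

Theorem lemma5 (R : realType) (P : 'M[R]_4) :
  spherical_tetrahedron P -> Z2_symmetric P ->
  let ap := cos ((lA P + lD P) / 2) in
  let am := cos ((lA P - lD P) / 2) in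
  let b := cos (lB P) in
  let c := cos (lC P) in
  let Ds := Delta_star ap am b c in
  let t2 := t_sq ap am b c in
  let s := fun i j : 'I_4 => cofactor (Gstar ap am b c) i j in
  [/\ am ^+ 2 - t2 = am ^+ 6 * (s 0 0) ^+ 2 / Ds,
      ap ^+ 2 - t2 = am ^+ 6 * (s 0 1) ^+ 2 / Ds,
      b ^+ 2 - t2 = am ^+ 6 * (s 0 2) ^+ 2 / Ds &
      c ^+ 2 - t2 = am ^+ 6 * (s 0 3) ^+ 2 / Ds].

Proof.
move=> HT HZ ap am b c Ds t2 s.
have [Hd HP] := HT.
set x := gram P 0 1. set y := gram P 2 3.
have Hdet := det_gram R P HT HZ.
simpl in Hdet; rewrite -/x -/y in Hdet.
have bx := gram_bound R P 0 1 (Hd 0) (Hd 1).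
have by' := gram_bound R P 2 3 (Hd 2) (Hd 3).
have bb := gram_bound R P 0 2 (Hd 0) (Hd 2).
have bc := gram_bound R P 0 3 (Hd 0) (Hd 3).
have nx : x != -1 by apply: gram_neq.
have ny : y != -1 by apply: gram_neq.
have Ix : x \in `[(-1), 1] by rewrite in_itv /=.
have Iy : y \in `[(-1), 1] by rewrite in_itv /=.
have Ib : gram P 0 2 \in `[(-1), 1] by rewrite in_itv /=.
have Ic : gram P 0 3 \in `[(-1), 1] by rewrite in_itv /=.
have Eb : b = gram P 0 2 by rewrite /b /lB /edge_len acosK.
have Ec : c = gram P 0 3 by rewrite /c /lC /edge_len acosK.
have cA : cos (lA P) = x by rewrite /lA /edge_len acosK.
have cD : cos (lD P) = y by rewrite /lD /edge_len acosK.
set u := (lA P + lD P) / 2. set v := (lA P - lD P) / 2.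
have EA : lA P = u + v by rewrite /u /v; lra.
have ED : lD P = u - v by rewrite /u /v; lra.
have Hx : x = ap * am - sin u * sin v by rewrite -cA EA cosD.
have Hy : y = ap * am + sin u * sin v by rewrite -cD ED cosB.
have Hpm : ap * am = (x + y) / 2 by rewrite Hx Hy; field.
have HS : ap ^+ 2 + am ^+ 2 = 1 + x * y.
  rewrite Hx Hy; have := sin2cos2 u; have := sin2cos2 v; rewrite -/ap -/am => h1 h2.
  have -> : (ap * am - sin u * sin v) * (ap * am + sin u * sin v) =
    ap ^+ 2 * am ^+ 2 - sin u ^+ 2 * sin v ^+ 2 by ring.
  rewrite h1 h2; ring.
have EDs : Ds = \det P ^+ 2.
  rewrite Hdet -Eb -Ec /Ds /Delta_star.
  have -> : (ap + am + b + c) * (ap + am - b - c) * (ap - am - b + c) * (ap - am + b - c) =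
    (ap ^+ 2 + am ^+ 2) ^+ 2 - 4 * (ap * am) ^+ 2 - 2 * (ap ^+ 2 + am ^+ 2) * (b ^+ 2 + c ^+ 2)
    + 8 * (ap * am) * b * c + (b ^+ 2 - c ^+ 2) ^+ 2 by ring.
  by rewrite HS Hpm; field.
have HDs : Ds != 0 by rewrite EDs expf_neq0.
have Hm : am != 0.
  apply/lt0r_neq0/cos_gt0_pihalf.
  have a1 : 0 <= lA P by apply: acos_ge0.
  have a2 : lA P < pi by apply: acos_ltpi; rewrite lt_neqAle eq_sym nx.
  have a3 : 0 <= lD P by apply: acos_ge0.
  have a4 : lD P < pi by apply: acos_ltpi; rewrite lt_neqAle eq_sym ny.
  rewrite /v; apply/andP; split; lra.
rewrite /s /t2 GstarE.
split; apply: alg_id => //; rewrite /cofactor minorE det3 /subf /hs /bump /= /Delta_star.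
all: rewrite exprMn sqrr_sign mul1r.
all: by field.
Qed.
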